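(* Let $G$ be a connected nontrivial graph with $m$ vertices and let $n\geq4$. If $\min\{n^2\lambda(G),\ (n-1)(m+2e(G))\}> 2n\delta(G)+2n-4$, then $G\boxtimes K_n$ is super restricted edge-connected.
   Context: All graphs are finite, simple and undirected; ''nontrivial'' means having at least two vertices. $K_n$ denotes the complete graph on $n$ vertices. For a graph $G$: $e(G)=|E(G)|$; $\delta(G)$ is the minimum degree; $\lambda(G)$ is the edge-connectivity. A restricted edge-cut of a connected graph $G$ is a set $S\subseteq E(G)$ such that $G-S$ is disconnected and every component of $G-S$ has at least $2$ vertices; $\lambda'(G)$ is the minimum cardinality of a restricted edge-cut. A graph is super restricted edge-connected if every minimum restricted edge-cut $S$ isolates an edge, i.e. some component of $G-S$ consists of exactly two (adjacent) vertices. The strong product $G\boxtimes H$ has vertex set $V(G)\times V(H)$, with $(x_1,y_1)$ and $(x_2,y_2)$ adjacent iff either $x_1=x_2$ and $y_1y_2\in E(H)$, or $y_1=y_2$ and $x_1x_2\in E(G)$, or $x_1x_2\in E(G)$ and $y_1y_2\in E(H)$. *)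

(* Defs.v *)
From mathcomp Require Import all_boot.
Set Implicit Arguments. Unset Strict Implicit. Unset Printing Implicit Defensive.

Section Graphs.
Variable T : finType.
Implicit Type e : rel T.

Definition simple_graph e := symmetric e /\ irreflexive e.

Definition edges e : {set {set T}} :=
  [set A : {set T} | [exists x, exists y, e x y && (A == [set x; y])]].

Definition nedges e : nat := #|edges e|.

Definition degree e (x : T) : nat := #|[set y | e x y]|.

(* minimum degree delta(G) (graph assumed nonempty) *)
Definition min_degree e : nat := \big[minn/#|T|]_(x : T) degree e x.

Definition connected_graph e := forall x y : T, connect e x y.

Definition del_edges e (S : {set {set T}}) : rel T :=
  fun x y => e x y && ([set x; y] \notin S).

Definition comp_of e (S : {set {set T}}) (x : T) : {set T} :=
  [set y | connect (del_edges e S) x y].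

Definition is_edge_cut e (S : {set {set T}}) :=
  (S \subset edges e) && [exists x, exists y, ~~ connect (del_edges e S) x y].

Definition edge_conn e : nat :=
  \big[minn/#|edges e|]_(S : {set {set T}} | is_edge_cut e S) #|S|.

Definition is_restricted_edge_cut e (S : {set {set T}}) :=
  is_edge_cut e S && [forall x, 2 <= #|comp_of e S x|].

Definition is_min_restricted_edge_cut e (S : {set {set T}}) :=
  is_restricted_edge_cut e S /\
  forall S' : {set {set T}}, is_restricted_edge_cut e S' -> #|S| <= #|S'|.

(* every minimum restricted edge cut isolates an edge *)
Definition super_restricted_edge_connected e :=
  forall S : {set {set T}}, is_min_restricted_edge_cut e S ->
    exists x : T, #|comp_of e S x| = 2.

End Graphs.

Definition complete_graph (n : nat) : rel 'I_n := fun i j => i != j.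

Definition strong_product (T U : finType) (eG : rel T) (eH : rel U) : rel (T * U) :=
  fun p q => [|| (p.1 == q.1) && eH p.2 q.2,
                (p.2 == q.2) && eG p.1 q.1
              | eG p.1 q.1 && eH p.2 q.2].
Arguments complete_graph : clear implicits.

(* Main.v *)
Require Import Defs.
From mathcomp Require Import all_boot.
From mathcomp Require Import zify.
Set Implicit Arguments. Unset Strict Implicit. Unset Printing Implicit Defensive.
Section Gen.
Variable T : finType.
Variable e : rel T.
Hypothesis He : simple_graph e.

Let esym x y : e x y = e y x.
Proof. by case: He => s _; rewrite s. Qed.

Let eirr x : e x x = false.
Proof. by case: He => _ i; rewrite i. Qed.

Lemma bigmin_le (I : finType) (P : pred I) (F : I -> nat) d i :
  P i -> \big[minn/d]_(j | P j) F j <= F i.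
Proof.
move=> Pi; have : i \in index_enum I by rewrite mem_index_enum.
elim: (index_enum I) => [//|j r IH]; rewrite inE big_cons.
case/orP=> [/eqP <-|ir]; first by rewrite Pi geq_minl.
case: ifP => _; last exact: IH. by rewrite geq_min (IH ir) orbT.
Qed.

Lemma bigmin_cases (I : finType) (P : pred I) (F : I -> nat) d :
  \big[minn/d]_(j | P j) F j = d \/ exists2 i, P i & \big[minn/d]_(j | P j) F j = F i.
Proof.
apply: (big_ind (fun v => v = d \/ exists2 i, P i & v = F i)); first by left.
- move=> u v Hu Hv; rewrite /minn; case: ifP => _; [exact: Hu| exact: Hv].
- by move=> i Pi; right; exists i.
Qed.

Lemma degree_lt x : degree e x < #|T|.
Proof.
rewrite /degree; apply: proper_card; apply/properP; split.
  by apply/subsetP.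
by exists x => //; rewrite inE eirr.
Qed.

Lemma mindeg_le x : min_degree e <= degree e x.
Proof. exact: bigmin_le. Qed.

Lemma mindeg_ex : 0 < #|T| -> exists x, degree e x = min_degree e.
Proof.
move=> T0; case: (bigmin_cases xpredT (degree e) #|T|) => [H|[x _ H]].
  case/card_gt0P: T0 => x _.
  have := mindeg_le x; rewrite /min_degree H => le.
  by have := degree_lt x; rewrite ltnNge le.
by exists x.
Qed.


Lemma edge_conn_le S : is_edge_cut e S -> edge_conn e <= #|S|.
Proof. by move=> HS; apply: (bigmin_le (P := is_edge_cut e)). Qed.

Lemma set2C (x y : T) : [set x; y] = [set y; x].
Proof. by rewrite setUC. Qed.

Definition crossp (A : {set T}) :=
  [set p : T * T | (p.1 \in A) && (p.2 \notin A) && e p.1 p.2].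

Lemma cut_lemma (A : {set T}) x0 z0 :
  x0 \in A -> z0 \notin A -> edge_conn e <= #|crossp A|.
Proof.
move=> x0A z0A.
set S := [set [set p.1; p.2] | p in crossp A].
apply: leq_trans (leq_imset_card (fun p : T * T => [set p.1; p.2]) (crossp A)).
apply: edge_conn_le; apply/andP; split.
  apply/subsetP => E /imsetP [p]; rewrite inE => /andP [_ ep] ->.
  by rewrite inE; apply/existsP; exists p.1; apply/existsP; exists p.2; rewrite ep eqxx.
apply/existsP; exists x0; apply/existsP; exists z0; apply/negP => C.
have cl : closed (del_edges e S) A.
  move=> x y /andP [exy nS].
  case xA: (x \in A); case yA: (y \in A) => //.
    case/negP: nS; apply/imsetP; exists (x, y) => //.
    by rewrite inE /= xA yA exy.
  case/negP: nS; rewrite set2C; apply/imsetP; exists (y, x) => //.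
  by rewrite inE /= xA yA esym exy.
by have := closed_connect cl C; rewrite x0A (negbTE z0A).
Qed.

Lemma sum_degree : \sum_x degree e x = #|[set p : T * T | e p.1 p.2]|.
Proof.
rewrite -sum1dep_card -(pair_big_dep xpredT (fun x y => e x y) (fun _ _ => 1)) /=.
by apply: eq_bigr => x _; rewrite sum1dep_card.
Qed.

Lemma handshake : 2 * nedges e <= \sum_x degree e x.
Proof.
rewrite sum_degree.
set P1 := [set p : T * T | e p.1 p.2 && (enum_rank p.1 < enum_rank p.2)].
set P2 := [set p : T * T | e p.1 p.2 && (enum_rank p.2 < enum_rank p.1)].
have sw : injective (fun p : T * T => (p.2, p.1)) by move=> [a b] [c d] [-> ->].
have P2E : P2 = [set (p.2, p.1) | p in P1].
  apply/setP => [[x y]]; rewrite inE /=; apply/idP/imsetP.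
    by move=> H; exists (y, x) => //; rewrite inE /= esym.
  by move=> [[u v]]; rewrite inE /= => H [-> ->]; rewrite esym.
have le1 : nedges e <= #|P1|.
  rewrite /nedges; apply: leq_trans (leq_imset_card (fun p : T * T => [set p.1; p.2]) P1).
  apply: subset_leq_card; apply/subsetP => E; rewrite inE => /existsP [x] /existsP [y] /andP [exy /eqP ->].
  have xy : enum_rank x != enum_rank y.
    by apply/negP => /eqP /enum_rank_inj xy; rewrite xy eirr in exy.
  case: (ltngtP (enum_rank x) (enum_rank y)) => H.
  - by apply/imsetP; exists (x, y) => //; rewrite inE /= exy H.
  - by apply/imsetP; exists (y, x); [rewrite inE /= esym exy H | rewrite set2C].
  - by move/val_inj: H => H; rewrite H eqxx in xy.
have dis : P1 :&: P2 = set0.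
  apply/setP => p; rewrite !inE; apply/negP => /andP [/andP [_ a] /andP [_ b]].
  by have := ltn_trans a b; rewrite ltnn.
have sub : P1 :|: P2 \subset [set p : T * T | e p.1 p.2].
  by apply/subsetP => p; rewrite !inE => /orP [/andP [-> _]|/andP [-> _]].
have := cardsUI P1 P2; rewrite dis cards0 addn0 => U.
have := subset_leq_card sub; rewrite U P2E card_imset //.
lia.
Qed.

Lemma degree_ge1 : connected_graph e -> 2 <= #|T| -> forall x, 1 <= degree e x.
Proof.
move=> co T2 x.
have : 0 < #|[set~ x]| by rewrite cardsC1; lia.
case/card_gt0P => y; rewrite !inE => yx.
case/connectP: (co x y) => [[|z p]] /=; first by move=> _ yx'; rewrite yx' eqxx in yx.
case/andP => exz _ _; apply/card_gt0P; exists z; by rewrite inE.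
Qed.

End Gen.

Lemma pf1 n x : 0 < x -> x < n -> n - 1 <= x * (n - x).
Proof. move=> h1 h2; nia. Qed.

Lemma sk_lem s k n : 2 <= s -> 2 <= k -> s + k = 2 * n -> 4 * n - 4 <= s * k.
Proof. move=> h1 h2 h3; nia. Qed.

Lemma sa n d a b du dw (E : bool) : 4 <= n -> 1 <= d -> d <= du -> d <= dw -> a < n -> b < n -> 3 <= a + b ->
  (E -> du = 1 -> dw = 1 -> a = 0 \/ b = 0) ->
  2 * n * d + 2 * n - 4 < a * (n - a) + a * (n * du - (if E then b else 0)) + b * (n - b) + b * (n * dw - (if E then a else 0)).
Proof.
move=> n4 d1 du1 dw1 an bn s3 side.
have fa : (n - 1) <= a * (n - a) + b * (n - b).
  case: a an s3 side => [|a] an s3 side; case: b bn s3 side => [|b] bn s3 side /=.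
  - by [].
  - by rewrite add0n; apply: (@pf1 n b.+1 isT bn).
  - by rewrite addn0; apply: (@pf1 n a.+1 isT an).
  - by apply: leq_trans (@pf1 n a.+1 isT an) _; apply: leq_addr.
have nd : n <= n * d by rewrite -{1}(muln1 n) leq_mul2l d1 orbT.
have hdu : n * d <= n * du by rewrite leq_mul2l du1 orbT.
have hdw : n * d <= n * dw by rewrite leq_mul2l dw1 orbT.
case: E side => side; last first.
  rewrite !subn0.
  have h1 : a * (n * du) + b * (n * dw) >= (a + b) * (n * d).
    rewrite mulnDl; apply: leq_add; by rewrite leq_mul2l hdu orbT || rewrite leq_mul2l hdw orbT.
  have h2 : (a + b) * (n * d) >= 3 * (n * d) by rewrite leq_mul2r s3 orbT.
  lia.
case: a an s3 side fa => [|a] an s3 side fa.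
  rewrite /= mul0n.
  have h1 : b * (n * dw - 0) >= 3 * (n * d) by rewrite subn0; apply: leq_mul => //; lia.
  lia.
case: b bn s3 side fa => [|b] bn s3 side fa.
  rewrite /= mul0n subn0 addn0.
  have h1 : a.+1 * (n * du) >= 3 * (n * d) by apply: leq_mul => //; lia.
  lia.
set A := a.+1; set B := b.+1.
have ea : A * (n * du - B) = A * (n - B) + n * (A * (du - 1)).
  have -> : n * du - B = (n - B) + n * (du - 1) by rewrite mulnBr muln1; lia.
  by rewrite mulnDr mulnA [A * n]mulnC -mulnA.
have eb : B * (n * dw - A) = B * (n - A) + n * (B * (dw - 1)).
  have -> : n * dw - A = (n - A) + n * (dw - 1) by rewrite mulnBr muln1; lia.
  by rewrite mulnDr mulnA [B * n]mulnC -mulnA.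
rewrite ea eb.
have br : A * (n - A) + A * (n - B) + B * (n - B) + B * (n - A) = (A + B) * (2 * n - (A + B)).
  rewrite -!mulnDr.
  have -> : 2 * n - (A + B) = (n - A) + (n - B) by lia.
  rewrite !mulnDr !mulnDl; lia.
have sk : (A + B) * (2 * n - (A + B)) >= 4 * n - 4.
  have k2 : 2 <= 2 * n - (A + B) by lia.
  have s2 : 2 <= A + B by lia.
  apply: sk_lem => //; lia.
case: (leqP 2 d) => d2.
  have x1 : A * (du - 1) + B * (dw - 1) >= (A + B) * (d - 1).
    rewrite mulnDl; apply: leq_add; apply: leq_mul => //; lia.
  have x2 : n * (A * (du - 1) + B * (dw - 1)) >= n * ((A + B) * (d - 1)) by rewrite leq_mul2l x1 orbT.
  have x3 : 3 * (n * (d - 1)) <= n * ((A + B) * (d - 1)).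
    by rewrite [X in _ <= X]mulnCA leq_mul2r s3 orbT.
  have x4 : n * (d - 1) = n * d - n by rewrite mulnBr muln1.
  have : n * (A * (du - 1)) + n * (B * (dw - 1)) = n * (A * (du - 1) + B * (dw - 1)) by rewrite mulnDr.
  have : 2 * n * d = 2 * (n * d) by rewrite mulnA.
  have : 2 * n <= n * d by rewrite mulnC leq_mul2l d2 orbT.
  move: br sk x2 x3 x4 n4; clear; lia.
have dd : d = 1 by lia.
have : 2 <= du \/ 2 <= dw.
  case: (leqP 2 du) => ?; first by left. case: (leqP 2 dw) => ?; first by right.
  have [] := side erefl; lia.
move=> hd.
have : n * (A * (du - 1)) + n * (B * (dw - 1)) >= n.
  case: hd => h.
    apply: leq_trans (leq_addr _ _); rewrite -{1}(muln1 n) leq_mul2l; apply/orP; right; rewrite muln_gt0; apply/andP; split; lia.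
  apply: leq_trans (leq_addl _ _); rewrite -{1}(muln1 n) leq_mul2l; apply/orP; right; rewrite muln_gt0; apply/andP; split; lia.
move=> hx.
rewrite dd muln1; move: br sk n4 hx; clear; lia.
Qed.

Lemma ar3 n d : 4 <= n -> 1 <= d -> 2 * n * d + 2 * n - 4 < (n - 1) * (3 * (1 + d)).
Proof. move=> h1 h2; nia. Qed.

Section Prod.
Variable T : finType.
Variable e : rel T.
Hypothesis He : simple_graph e.
Variable n : nat.

Let esym x y : e x y = e y x.
Proof. by case: He => s _; rewrite s. Qed.
Let eirr x : e x x = false.
Proof. by case: He => _ i; rewrite i. Qed.

Local Notation V := (T * 'I_n)%type.
Local Notation H := (strong_product e (complete_graph n)).

Definition aX (X : {set V}) x := #|[set i | (x, i) \in X]|.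
Definition bd (X : {set V}) :=
  #|[set p : V * V | (p.1 \in X) && (p.2 \notin X) && H p.1 p.2]|.

Lemma a_le (X : {set V}) (x : T) : aX X x <= n.
Proof. by have := max_card [set i | (x, i) \in X]; rewrite card_ord. Qed.

Lemma a_notin (X : {set V}) (x : T) : #|[set j | (x, j) \notin X]| = n - aX X x.
Proof.
have -> : [set j | (x, j) \notin X] = ~: [set i | (x, i) \in X].
  by apply/setP => j; rewrite !inE.
by rewrite cardsCs setCK card_ord.
Qed.

Lemma a_compl (X : {set V}) (x : T) : aX (~: X) x = n - aX X x.
Proof.
rewrite /aX -a_notin; apply: eq_card => j; by rewrite !inE.
Qed.

Lemma card_sum (X : {set V}) : #|X| = \sum_x aX X x.
Proof.
rewrite -sum1_card.
rewrite (eq_bigl (fun p : V => xpredT p.1 && ((p.1, p.2) \in X))); last by move=> [x i].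
rewrite -(pair_big_dep xpredT (fun x i => (x, i) \in X) (fun _ _ => 1)) /=.
by apply: eq_bigr => x _; rewrite sum1dep_card.
Qed.

Lemma nbr_count (X : {set V}) (x : T) (i : 'I_n) : (x, i) \in X ->
  #|[set v : V | (v \notin X) && H (x, i) v]| =
  (n - aX X x) + \sum_(y | e x y) (n - aX X y).
Proof.
move=> xi.
rewrite -sum1dep_card.
rewrite (eq_bigl (fun p : V => xpredT p.1 && ((p.1, p.2) \notin X) && H (x, i) (p.1, p.2)));
  last by move=> [y j].
rewrite -(pair_big_dep xpredT (fun y j => ((y, j) \notin X) && H (x, i) (y, j)) (fun _ _ => 1)) /=.
rewrite big_mkcond /= [in RHS]big_mkcond /= (bigD1 x) //= [in RHS](bigD1 x) //= eirr add0n.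
congr (_ + _).
  rewrite sum1dep_card -a_notin; apply: eq_card => j; rewrite !inE /= /strong_product /complete_graph /= eqxx eirr /= andbF orbF.
  case jX: ((x, j) \in X) => //=.
  by rewrite orbF; apply/negP => /eqP ij; rewrite ij jX in xi.
apply: eq_bigr => y yx.
rewrite sum1dep_card; case: ifP => exy.
  rewrite -a_notin; apply: eq_card => j; rewrite !inE /= /strong_product /complete_graph /= exy eq_sym (negbTE yx) /=.
  by case: (i == j); rewrite ?andbT ?orbT.
apply: eq_card0 => j; rewrite !inE /= /strong_product /complete_graph /= exy eq_sym (negbTE yx) /=.
by rewrite !andbF.
Qed.

Lemma bd_formula (X : {set V}) : bd X =
  \sum_x (aX X x * (n - aX X x) + \sum_(y | e x y) aX X x * (n - aX X y)).
Proof.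
rewrite /bd -sum1dep_card.
rewrite (eq_bigl (fun p : V * V => (p.1 \in X) && ((p.2 \notin X) && H p.1 p.2)));
  last by move=> p; rewrite andbA.
rewrite -(pair_big_dep (fun u : V => u \in X) (fun u v => (v \notin X) && H u v) (fun _ _ => 1)) /=.
rewrite (eq_bigr (fun u : V => #|[set v : V | (v \notin X) && H u v]|)); last by move=> u _; rewrite sum1dep_card.
rewrite (eq_bigl (fun p : V => xpredT p.1 && ((p.1, p.2) \in X))); last by move=> [x i].
rewrite -(pair_big_dep xpredT (fun x i => (x, i) \in X) (fun x i => #|[set v : V | (v \notin X) && H (x, i) v]|)) /=.
apply: eq_bigr => x _.
rewrite (eq_bigr (fun i => (n - aX X x) + \sum_(y | e x y) (n - aX X y))); last by move=> i; apply: nbr_count.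
rewrite (eq_bigl (fun i => i \in [set i | (x, i) \in X])); last by move=> i; rewrite inE.
by rewrite sum_nat_const -/(aX X x) mulnDr big_distrr.
Qed.


Lemma Hsym (u v : V) : H u v = H v u.
Proof.
case: u v => [a i] [b j]; rewrite /strong_product /complete_graph /= esym (eq_sym a) (eq_sym i).
by [].
Qed.

Lemma bd_sym (X : {set V}) : bd X = bd (~: X).
Proof.
have sw : injective (fun p : V * V => (p.2, p.1)) by move=> [a b] [c d] [-> ->].
rewrite /bd -(card_imset _ sw); apply: eq_card => [[u v]].
apply/imsetP/idP.
  by move=> [[u' v']]; rewrite !inE /= => /andP [/andP [a b] c] [-> ->]; rewrite a b Hsym c.
by rewrite !inE /= negbK => /andP [/andP [a b] c]; exists (v, u); rewrite // inE /= a b Hsym c.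
Qed.

Lemma del_sym (S : {set {set V}}) (u v : V) : del_edges H S u v = del_edges H S v u.
Proof. by rewrite /del_edges Hsym setUC. Qed.

Lemma bd_le_cut (S : {set {set V}}) (x0 : V) : bd (comp_of H S x0) <= #|S|.
Proof.
set X := comp_of H S x0.
set D := [set p : V * V | (p.1 \in X) && (p.2 \notin X) && H p.1 p.2].
have inj : {in D &, injective (fun p : V * V => [set p.1; p.2])}.
  move=> [u v] [u' v']; rewrite !inE /= => /andP [/andP [uX vX] _] /andP [/andP [uX' vX'] _] E.
  have : u \in [set u'; v'] by rewrite -E !inE eqxx.
  rewrite !inE => /orP [/eqP uu|/eqP uv]; last by rewrite -uv uX in vX'.
  have : v \in [set u'; v'] by rewrite -E !inE eqxx orbT.
  rewrite !inE => /orP [/eqP vu|/eqP vv]; first by rewrite vu uX' in vX.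
  by rewrite uu vv.
rewrite /bd -/X -/D -(card_in_imset inj); apply: subset_leq_card; apply/subsetP => E /imsetP [[u v]].
rewrite inE /= => /andP [/andP [uX vX] Huv] ->.
apply/negPn/negP => nS; case/negP: vX.
rewrite inE; apply: connect_trans (_ : connect _ u v).
  by move: uX; rewrite inE.
by apply: connect1; rewrite /del_edges Huv nS.
Qed.

Lemma count_ordm b c m : \sum_(t < m) ((b <= t) && (t < c)) = minn c m - b.
Proof.
elim: m => [|m IH]; first by rewrite big_ord0; lia.
rewrite big_ord_recr /= IH.
case: (leqP b m) => H1; case: (ltnP m c) => H2 /=; lia.
Qed.

Lemma pf a : a < n -> (n-1)*(0<a) <= a*(n-a).
Proof. case: a => [|a] /=; nia. Qed.
Lemma pg a b : a < n -> b < n -> (n-1)*((0<a)+(0<b)) <= a*(n-b) + b*(n-a).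
Proof. case: a => [|a]; case: b => [|b] /=; nia. Qed.

Lemma sym_sum (F : T -> T -> nat) :
  \sum_x \sum_(y | e x y) F x y = \sum_x \sum_(y | e x y) F y x.
Proof.
rewrite (eq_bigr (fun x => \sum_y (if e x y then F x y else 0))); last by move=> x _; rewrite big_mkcond.
rewrite exchange_big /=; apply: eq_bigr => x _; rewrite [RHS]big_mkcond /=; apply: eq_bigr => y _.
by rewrite esym.
Qed.

Lemma sum_deg_const x c : \sum_(y | e x y) c = c * degree e x.
Proof. by rewrite /degree -sum1dep_card big_distrr /= muln1. Qed.

Lemma symbound (X : {set V}) : (forall x, aX X x < n) ->
  (n - 1) * \sum_x (0 < aX X x) * (1 + degree e x) <= bd X.
Proof.
move=> alt; rewrite bd_formula big_split /=.
set a := aX X.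
have E1 : (n - 1) * \sum_x (0 < a x) <= \sum_x a x * (n - a x).
  by rewrite big_distrr /=; apply: leq_sum => x _; apply: pf.
have E2 : 2 * ((n - 1) * \sum_x (0 < a x) * degree e x) <=
          2 * \sum_x \sum_(y | e x y) a x * (n - a y).
  have HS : \sum_x \sum_(y | e x y) a x * (n - a y) + \sum_x \sum_(y | e x y) a y * (n - a x)
       = \sum_x \sum_(y | e x y) (a x * (n - a y) + a y * (n - a x)).
    by rewrite -big_split /=; apply: eq_bigr => x _; rewrite -big_split.
  have HL : \sum_x \sum_(y | e x y) (n - 1) * ((0 < a x) + (0 < a y)) <=
            \sum_x \sum_(y | e x y) (a x * (n - a y) + a y * (n - a x)).
    by apply: leq_sum => x _; apply: leq_sum => y _; apply: pg.
  have HR : \sum_x \sum_(y | e x y) (n - 1) * ((0 < a x) + (0 < a y)) =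
            \sum_x \sum_(y | e x y) (n - 1) * (0 < a x) + \sum_x \sum_(y | e x y) (n - 1) * (0 < a y).
    rewrite -big_split /=; apply: eq_bigr => x _; rewrite -big_split /=.
    by apply: eq_bigr => y _; rewrite mulnDr.
  have HR2 : \sum_x \sum_(y | e x y) (n - 1) * (0 < a y) = \sum_x \sum_(y | e x y) (n - 1) * (0 < a x).
    exact: (sym_sum (fun x y => (n - 1) * (0 < a y))).
  have HR3 : \sum_x \sum_(y | e x y) (n - 1) * (0 < a x) = (n - 1) * \sum_x (0 < a x) * degree e x.
    rewrite big_distrr /=; apply: eq_bigr => x _; by rewrite sum_deg_const mulnA.
  have Hsym := sym_sum (fun x y => a x * (n - a y)).
  rewrite /= in Hsym.
  rewrite mul2n -addnn -HR3 -[X in _ + X <= _]HR2 -HR; apply: leq_trans HL _.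
  by rewrite -HS -Hsym addnn mul2n.
have E3 : (n - 1) * \sum_x (0 < a x) * degree e x <= \sum_x \sum_(y | e x y) a x * (n - a y).
  by rewrite -(leq_pmul2l (isT : 0 < 2)).
rewrite (eq_bigr (fun x => (0 < a x) + (0 < a x) * degree e x)); last by move=> x _; rewrite mulnDr muln1.
rewrite big_split /= mulnDr; exact: leq_add.
Qed.

Lemma sumc_ord c : \sum_(t < n) c = n * c.
Proof. by rewrite sum_nat_const card_ord. Qed.

Lemma pl a b : a <= n -> b <= n -> n * (a - b) <= a * (n - b).
Proof. move=> ha hb; case: (leqP a b) => h. have -> : a - b = 0 by lia. by rewrite muln0. nia. Qed.

Lemma layer (X : {set V}) x0 z0 : aX X x0 = n -> aX X z0 = 0 ->
  n * (n * edge_conn e) <= bd X.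
Proof.
move=> ax0 az0; set a := aX X in ax0 az0 *.
have step1 : \sum_x \sum_(y | e x y) n * (a x - a y) <= bd X.
  rewrite bd_formula; apply: leq_sum => x _; apply: leq_trans (leq_addl _ _); apply: leq_sum => y _.
  by apply: pl; apply: a_le.
have step3 : \sum_x \sum_(y | e x y) (a x - a y) =
   \sum_(t < n) \sum_x \sum_(y | e x y) ((a y <= t) && (t < a x)).
  rewrite exchange_big /=; apply: eq_bigr => x _.
  rewrite exchange_big /=; apply: eq_bigr => y _.
  by rewrite count_ordm; congr (_ - _); symmetry; apply/minn_idPl; apply: a_le.
have step4 : forall t : 'I_n, edge_conn e <= \sum_x \sum_(y | e x y) ((a y <= t) && (t < a x)).
  move=> t; set A := [set x | t < a x].
  have x0A : x0 \in A by rewrite inE ax0.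
  have z0A : z0 \notin A by rewrite inE az0.
  apply: leq_trans (cut_lemma He x0A z0A) _; apply: eq_leq.
  rewrite /crossp -sum1dep_card.
  rewrite (eq_bigl (fun p : T * T => xpredT p.1 && (e p.1 p.2 && ((a p.2 <= t) && (t < a p.1)))));
    last by move=> [x y]; rewrite /= !inE -leqNgt; case: (e x y); case: (t < a x); rewrite ?andbT ?andbF.
  rewrite -(pair_big_dep xpredT (fun x y => e x y && ((a y <= t) && (t < a x))) (fun _ _ => 1)) /=.
  apply: eq_bigr => x _; rewrite big_mkcondr /=; apply: eq_bigr => y _.
  by case: ((a y <= t) && (t < a x)).
apply: leq_trans step1.
rewrite (eq_bigr (fun x => n * \sum_(y | e x y) (a x - a y))); last by move=> x _; rewrite big_distrr.
rewrite -big_distrr /=; case: (posnP n) => [n0|n0]; first by rewrite n0.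
rewrite leq_pmul2l // step3 -sumc_ord; apply: leq_sum => t _; exact: step4.
Qed.

Lemma inner_sub (X : {set V}) x :
  \sum_(y | e x y) (n - aX X y) = n * degree e x - \sum_(y | e x y) aX X y.
Proof.
have : \sum_(y | e x y) (n - aX X y) + \sum_(y | e x y) aX X y = n * degree e x.
  rewrite -big_split /= (eq_bigr (fun _ => n)); first by rewrite sum_deg_const.
  by move=> y _; rewrite subnK // a_le.
lia.
Qed.

Lemma nb_sum (X : {set V}) x o : (forall y, y != x -> y != o -> aX X y = 0) ->
  \sum_(y | e x y) aX X y = if e x o then aX X o else 0.
Proof.
move=> H0; rewrite big_mkcond (bigD1 o) //= big1 ?addn0 // => y yo.
case: ifP => // exy; apply: H0 => //; apply/negP => /eqP yx; by rewrite yx eirr in exy.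
Qed.

Lemma small_bd (X : {set V}) u w : u != w ->
  (forall x, x != u -> x != w -> aX X x = 0) ->
  bd X = aX X u * (n - aX X u) + aX X u * (n * degree e u - (if e u w then aX X w else 0))
       + aX X w * (n - aX X w) + aX X w * (n * degree e w - (if e u w then aX X u else 0)).
Proof.
move=> uw H0; rewrite bd_formula (bigD1 u) //= [\sum_(i | i != u) _](bigD1 w) /=; last by rewrite eq_sym.
rewrite [\sum_(i | (i != u) && (i != w)) _]big1 ?addn0; last first.
  move=> x /andP [xu xw]; rewrite H0 // mul0n add0n big1 // => y _; by rewrite mul0n.
rewrite -!big_distrr /= !inner_sub (nb_sum (o := w)) // (nb_sum (x := w) (o := u)).
  by rewrite esym !addnA.
by move=> y yw yu; apply: H0.
Qed.

Lemma sum_ind (F : T -> nat) : \sum_x (0 < F x) = #|[set x | 0 < F x]|.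
Proof.
rewrite -sum1dep_card [RHS]big_mkcond /=; apply: eq_bigr => x _; by case: (0 < F x).
Qed.

Section Main.
Hypothesis Hc : connected_graph e.
Hypothesis HT : 2 <= #|T|.
Hypothesis Hn : 4 <= n.
Local Notation d := (min_degree e).
Local Notation xi := (2 * n * d + 2 * n - 4).
Hypothesis Hyp : xi < minn (n ^ 2 * edge_conn e) ((n - 1) * (#|T| + 2 * nedges e)).

Lemma d_ge1 : 1 <= d.
Proof.
have [x <-] := mindeg_ex He (ltnW HT).
exact: degree_ge1 Hc HT x.
Qed.

Lemma side_lemma (a : T -> nat) u w z : e u w -> degree e u = 1 -> degree e w = 1 ->
  a z = 0 -> a u = 0 \/ a w = 0.
Proof.
move=> euw du dw az.
have nb : forall x y, degree e x = 1 -> e x y -> forall v, e x v -> v = y.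
  move=> x y dx exy v exv.
  have /cards1P [c Hc1] : #|[set y | e x y]| == 1 by rewrite -/(degree e x) dx.
  have : y \in [set y | e x y] by rewrite inE.
  have : v \in [set y | e x y] by rewrite inE.
  by rewrite Hc1 !inE => /eqP -> /eqP ->.
have ewu : e w u by rewrite esym.
have nu := nb u w du euw; have nw := nb w u dw ewu.
have cl : closed e [set u; w].
  move=> x y exy; rewrite !inE.
  case: (eqVneq x u) => [xu|xu].
    by subst x; rewrite (nu y exy) !eqxx orbT.
  case: (eqVneq x w) => [xw|xw].
    by subst x; rewrite (nw y exy) !eqxx !orbT.
  rewrite /=; symmetry; apply/negP => /orP [/eqP yu|/eqP yw].
    by move: exy; rewrite yu esym => /nu xw'; rewrite xw' eqxx in xw.
  by move: exy; rewrite yw esym => /nw xu'; rewrite xu' eqxx in xu.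
have := closed_connect cl (Hc u z); rewrite !inE eqxx /= => Hz.
have : (z == u) || (z == w) by rewrite -Hz.
case/orP => [/eqP zu|/eqP zw].
  by left; rewrite -zu.
by right; rewrite -zw.
Qed.

Lemma sum_a_uw (Y : {set V}) u w : u != w -> (forall x, x != u -> x != w -> aX Y x = 0) ->
  #|Y| = aX Y u + aX Y w.
Proof.
move=> uw H0; rewrite card_sum (bigD1 u) //= [\sum_(i | i != u) _](bigD1 w) /=; last by rewrite eq_sym.
rewrite big1 ?addn0 // => x /andP [xu xw]; exact: H0.
Qed.

Lemma ml (Y : {set V}) : (forall x, aX Y x < n) -> 3 <= #|Y| -> xi < bd Y.
Proof.
move=> alt Y3.
have d1 := d_ge1.
have SB := symbound alt.
case: (boolP [forall x, 0 < aX Y x]) => [/forallP allpos | ].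
  have : (n - 1) * (#|T| + 2 * nedges e) <= bd Y.
    apply: leq_trans SB; rewrite leq_mul2l; apply/orP; right.
    rewrite (eq_bigr (fun x => 1 + degree e x)); last by move=> x _; rewrite allpos mul1n.
    rewrite big_split /= sum1_card leq_add2l; exact: handshake He.
  by move: Hyp; rewrite ltn_min => /andP [_ h2] h3; apply: leq_trans h2 h3.
rewrite negb_forall => /existsP [z]; rewrite -leqNgt leqn0 => /eqP az.
set A := [set x | 0 < aX Y x].
case: (leqP 3 #|A|) => A3.
  have J : 3 * (1 + d) <= \sum_x (0 < aX Y x) * (1 + degree e x).
    apply: (@leq_trans (\sum_x (0 < aX Y x) * (1 + d))).
      by rewrite -big_distrl /= sum_ind -/A leq_mul2r A3 orbT.
    by apply: leq_sum => x _; apply: leq_mul => //; rewrite leq_add2l; apply: mindeg_le.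
  apply: leq_trans (ar3 Hn d1) _; apply: leq_trans SB; by rewrite leq_mul2l J orbT.
have A0 : 0 < #|A|.
  rewrite card_gt0; apply/negP => /eqP A0.
  move: Y3; rewrite card_sum big1 // => x _.
  have : x \notin A by rewrite A0 inE.
  by rewrite inE -leqNgt leqn0 => /eqP.
have [u [w [uw sub]]] : exists u w, u != w /\ forall x, x \in A -> (x == u) || (x == w).
  case: (eqVneq #|A| 1) => A1.
    move/eqP: A1 => /cards1P [u Au].
    have : 0 < #|[set~ u]| by rewrite cardsC1; lia.
    case/card_gt0P => w; rewrite !inE => wu.
    exists u, w; split; first by rewrite eq_sym.
    by move=> x; rewrite Au inE => ->.
  have : #|A| == 2 by lia.
  case/cards2P => u [w [uw Auw]]; exists u, w; split => // x; by rewrite Auw !inE.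
have H0 : forall x, x != u -> x != w -> aX Y x = 0.
  move=> x xu xw; apply/eqP; rewrite -leqn0 leqNgt; apply/negP => ax.
  by have := sub x; rewrite inE ax (negbTE xu) (negbTE xw) => /(_ isT).
rewrite (small_bd uw H0).
have s3 : 3 <= aX Y u + aX Y w by rewrite -(sum_a_uw uw H0).
apply: sa => //; try apply: mindeg_le.
move=> E du1 dw1; exact: side_lemma E du1 dw1 az.
Qed.

Lemma bd_gt (X : {set V}) : 3 <= #|X| -> 3 <= #|~: X| -> xi < bd X.
Proof.
move=> X3 Xc3.
case: (boolP [forall x, aX X x < n]) => [/forallP alt|]; first exact: ml.
rewrite negb_forall => /existsP [x0]; rewrite -leqNgt => ax0.
have ax0' : aX X x0 = n by apply/eqP; rewrite eqn_leq a_le ax0.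
case: (boolP [exists z, aX X z == 0]) => [/existsP [z0 /eqP az0]|].
  have := layer ax0' az0; move: Hyp; rewrite ltn_min => /andP [h1 _].
  rewrite -mulnn -mulnA in h1 => h2; move: h1 h2; clear; lia.
rewrite negb_exists => /forallP allp.
rewrite bd_sym; apply: ml => // x; rewrite a_compl.
have := allp x; have := a_le X x; lia.
Qed.

Lemma deg_H (p : V) : #|[set q | H p q]| <= n - 1 + n * degree e p.1.
Proof.
set A := [set (p.1, j) | j in [set~ p.2]].
set B := setX [set y | e p.1 y] [set: 'I_n].
have sub : [set q | H p q] \subset A :|: B.
  apply/subsetP => [[y j]]; rewrite !inE /strong_product /complete_graph /=.
  case/orP => [/andP [/eqP <- ij]|/orP [/andP [_ ->]|/andP [-> _]]]; rewrite ?orbT //.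
  apply/orP; left; apply/imsetP; exists j => //; by rewrite !inE eq_sym.
have cA : #|A| <= n - 1.
  by apply: leq_trans (leq_imset_card _ _) _; rewrite cardsC1 card_ord; lia.
have cB : #|B| = n * degree e p.1 by rewrite cardsX cardsT card_ord mulnC.
have := subset_leq_card sub; have := cardsUI A B; move=> h3 h4; apply: leq_trans h4 _; rewrite -cB; apply: leq_trans (_ : _ <= #|A| + #|B|) _; [by rewrite -h3 leq_addr | by rewrite leq_add2r].
Qed.

Lemma del_conn_closed (S : {set {set V}}) (C : {set V}) :
  (forall u v, u \in C -> v \notin C -> H u v -> [set u; v] \in S) ->
  closed (del_edges H S) C.
Proof.
move=> HC u v /andP [huv nS].
case uC: (u \in C); case vC: (v \in C) => //.
  by rewrite (HC u v) ?uC ?vC in nS.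
by rewrite setUC (HC v u) ?uC ?vC // Hsym in nS.
Qed.

Lemma comp2 (S : {set {set V}}) (v w : V) : v != w -> del_edges H S v w ->
  2 <= #|comp_of H S v|.
Proof.
move=> vw dvw; rewrite -(eqP (_ : #|[set v; w]| == 2)); last by rewrite cards2 vw.
apply: subset_leq_card; apply/subsetP => z; rewrite !inE => /orP [/eqP ->|/eqP ->].
  exact: connect0.
exact: connect1.
Qed.

Lemma edge_pick (E : {set V}) a b c : H a b -> E = [set a; b] -> c \in E ->
  exists v, E = [set c; v] /\ H c v.
Proof.
move=> hab -> ; rewrite !inE => /orP [/eqP ->|/eqP ->]; first by exists b.
by exists a; rewrite setUC Hsym.
Qed.

Lemma main_super : super_restricted_edge_connected H.
Proof.
move=> S [HS Hmin].
case: (boolP [exists x, #|comp_of H S x| == 2]) => [/existsP [x /eqP h]|]; first by exists x.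
rewrite negb_exists => /forallP no2; exfalso.
have [x0 dx0] := mindeg_ex He (ltnW HT).
have n0 : 0 < n by lia.
have n1 : 1 < n by lia.
have n2 : 2 < n by lia.
pose i0 : 'I_n := Ordinal n0; pose i1 : 'I_n := Ordinal n1; pose i2 : 'I_n := Ordinal n2.
pose p : V := (x0, i0); pose q : V := (x0, i1).
have pq : p != q by rewrite /p /q xpair_eqE eqxx.
have Hpq : H p q by rewrite /strong_product /complete_graph /= eqxx.
pose S0 := [set E in edges H | (E != [set p; q]) && ((p \in E) || (q \in E))].
have S0card : #|S0| <= xi.
  pose I1 := [set [set p; v] | v in [set v | H p v] :\ q].
  pose I2 := [set [set q; v] | v in [set v | H q v] :\ p].
  have sub : S0 \subset I1 :|: I2.
    apply/subsetP => E; rewrite !inE => /andP [/existsP [a /existsP [b /andP [hab /eqP Eab]]] /andP [nE pqE]].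
    case/orP: pqE => [pE|qE].
      have [v [Ev Hpv]] := edge_pick hab Eab pE.
      apply/orP; left; apply/imsetP; exists v => //; rewrite !inE Hpv andbT.
      by apply/negP => /eqP vq; rewrite Ev vq eqxx in nE.
    have [v [Ev Hqv]] := edge_pick hab Eab qE.
    apply/orP; right; apply/imsetP; exists v => //; rewrite !inE Hqv andbT.
    by apply/negP => /eqP vp; rewrite Ev vp setUC eqxx in nE.
  have c1 : #|I1| < n - 1 + n * d.
    have := cardsD1 q [set v | H p v]; rewrite inE Hpq add1n => E1.
    have := deg_H p; rewrite /= dx0 E1 => h.
    exact: leq_ltn_trans (leq_imset_card _ _) h.
  have c2 : #|I2| < n - 1 + n * d.
    have := cardsD1 p [set v | H q v]; rewrite inE Hsym Hpq add1n => E1.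
    have := deg_H q; rewrite /= dx0 E1 => h.
    exact: leq_ltn_trans (leq_imset_card _ _) h.
  have cu : #|I1 :|: I2| <= #|I1| + #|I2| by rewrite -cardsUI leq_addr.
  apply: leq_trans (subset_leq_card sub) (leq_trans cu _).
  have := leq_add c1 c2.
  have : 2 * n * d = 2 * (n * d) by rewrite mulnA.
  move: Hn; clear; lia.
have S0r : is_restricted_edge_cut H S0.
  apply/andP; split; first (apply/andP; split).
  - by apply/subsetP => E; rewrite inE => /andP [].
  - apply/existsP; exists p; apply/existsP; exists (x0, i2); apply/negP => C.
    have cl : closed (del_edges H S0) [set p; q].
      apply: del_conn_closed => u v uC vC huv.
      rewrite inE; apply/andP; split.
        by rewrite inE; apply/existsP; exists u; apply/existsP; exists v; rewrite huv eqxx.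
      apply/andP; split.
        apply/negP => /eqP E; move: vC; rewrite -E !inE eqxx orbT //.
      by move: uC; rewrite !inE => /orP [/eqP ->|/eqP ->]; rewrite eqxx ?orbT.
    by have := closed_connect cl C; rewrite !inE eqxx /= /p /q !xpair_eqE eqxx.
  - apply/forallP => v.
    case: (eqVneq v p) => [->|vp].
      apply: (@comp2 _ p q) => //; rewrite /del_edges Hpq inE eqxx /=; by rewrite andbF.
    case: (eqVneq v q) => [->|vq].
      apply: (@comp2 _ q p); first by rewrite eq_sym.
      by rewrite del_sym /del_edges Hpq inE eqxx /= andbF.
    case: v vp vq => y i vp vq.
    have : 0 < #|~: [set i; i0; i1]|.
      have c3 : #|[set i; i0; i1]| <= 3.
        rewrite -setUA cardsU1 cards2; by case: (i \in _); case: (i0 != i1).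
      have := cardsC [set i; i0; i1]; rewrite card_ord; lia.
    case/card_gt0P => j; rewrite !inE => /norP [/norP [ji j0] j1].
    apply: (@comp2 _ (y, i) (y, j)).
      by apply/negP => /eqP [] /eqP; rewrite eq_sym (negbTE ji).
    rewrite /del_edges /strong_product /complete_graph /= eqxx eq_sym ji /=.
    rewrite inE negb_and; apply/orP; right; rewrite negb_and; apply/orP; right.
    rewrite !inE negb_or; apply/andP; split; apply/norP; split.
    + by rewrite eq_sym.
    + by apply/negP => /eqP [_ ji0]; rewrite ji0 eqxx in j0.
    + by rewrite eq_sym.
    + by apply/negP => /eqP [_ ji1]; rewrite ji1 eqxx in j1.
have leS : #|S| <= xi := leq_trans (Hmin S0 S0r) S0card.
case/andP: HS => /andP [_ /existsP [x /existsP [y nxy]]] /forallP allc.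
set X := comp_of H S x.
have X3 : 3 <= #|X|.
  have := allc x; have := no2 x; rewrite -/X; lia.
have Xc3 : 3 <= #|~: X|.
  apply: leq_trans (_ : 3 <= #|comp_of H S y|) _.
    have := allc y; have := no2 y; lia.
  apply: subset_leq_card; apply/subsetP => z; rewrite !inE => cyz; apply/negP => cxz.
  case/negP: nxy; apply: connect_trans cxz _.
  by rewrite (sym_connect_sym (@del_sym S)).
by have := leq_ltn_trans (leq_trans (bd_le_cut S x) leS) (bd_gt X3 Xc3); rewrite ltnn.
Qed.

End Main.

End Prod.


Theorem corollary3p9 (T : finType) (e : rel T) (n : nat) :
  simple_graph e -> connected_graph e -> 2 <= #|T| -> 4 <= n ->
  minn (n ^ 2 * edge_conn e) ((n - 1) * (#|T| + 2 * nedges e))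
    > 2 * n * min_degree e + 2 * n - 4 ->
  super_restricted_edge_connected (strong_product e (complete_graph n)).
Proof.
move=> He Hc HT Hn Hyp.
exact: (main_super He Hc HT Hn Hyp).
Qed.
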